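(* Let $a\ge b\ge2$ and $k$ be integers with $a+b+1\le k\le a+2b-1$. Then for every $(i,j)\in\overline{Q}_3$ we have $w_1,w_4,w_6\in\mathcal{R}^k_{(a,b),(i,j)}$.
   Context: $\widehat{\mathfrak{su}}(3)_k$ fusion. Let $P_+^k=\{(\lambda_1,\lambda_2)\in\mathbb{Z}_{\ge0}^2:\lambda_1+\lambda_2\le k\}$. For $\lambda,\mu,\nu\in P_+^k$ set - $\mathcal{A}=\tfrac13[2(\lambda_1+\mu_1+\nu_2)+\lambda_2+\mu_2+\nu_1]$, - $\mathcal{B}=\tfrac13[\lambda_1+\mu_1+\nu_2+2(\lambda_2+\mu_2+\nu_1)]$, - $k_0^{\max}=\min(\mathcal{A},\mathcal{B})$, - $k_0^{\min}=\max(\lambda_1+\lambda_2,\mu_1+\mu_2,\nu_1+\nu_2,\mathcal{A}-\lambda_1,\mathcal{A}-\mu_1,\mathcal{A}-\nu_2,\mathcal{B}-\lambda_2,\mathcal{B}-\mu_2,\mathcal{B}-\nu_1)$. The fusion multiplicity is $N^{(k)\nu}_{\lambda,\mu}=\min(k_0^{\max},k)-k_0^{\min}+1$ if $\mathcal{A},\mathcal{B}$ are nonnegative integers, $k_0^{\max}\ge k_0^{\min}$ and $k\ge k_0^{\min}$; otherwise it is $0$. The set $\mathcal{R}^k_{\lambda,\mu}$ is $\{\nu\in P_+^k:N^{(k)\nu}_{\lambda,\mu}\ne0\}$. The candidate weights are $w_1=(a-1,b+2)$, $w_2=(a+2,b-1)$, $w_3=(a+1,b-2)$, $w_4=(a-2,b+1)$,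 $w_5=(a+1,b+1)$, $w_6=(a-1,b-1)$. The set $\overline{Q}_3$ is defined by $\overline{Q}_3=\{(p+k-a-b,p-2k+2a+2b):p\in\mathbb{Z},\ 2k-2a-2b\le p\le k-a-1\}$. *)

(* Defs.v *)
From Stdlib Require Import ZArith Bool.
Open Scope Z_scope.

(* Dominant weights of su(3) at level k: P_+^k *)
Definition in_Pplus (k : Z) (l : Z * Z) : Prop :=
  0 <= fst l /\ 0 <= snd l /\ fst l + snd l <= k.

Definition A3 (l m n : Z * Z) : Z :=
  2 * (fst l + fst m + snd n) + snd l + snd m + fst n.
Definition B3 (l m n : Z * Z) : Z :=
  fst l + fst m + snd n + 2 * (snd l + snd m + fst n).

(* Fusion multiplicity N^{(k) nu}_{lambda, mu}.  A = A3/3, B = B3/3 are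
   nonnegative integers iff 3 divides A3, B3 and A3, B3 >= 0. *)
Definition fusion_mult (k : Z) (l m n : Z * Z) : Z :=
  let a3 := A3 l m n in
  let b3 := B3 l m n in
  if (a3 mod 3 =? 0) && (b3 mod 3 =? 0) && (0 <=? a3) && (0 <=? b3) then
    let A := a3 / 3 in
    let B := b3 / 3 in
    let kmax := Z.min A B in
    let kmin :=
      Z.max (fst l + snd l) (Z.max (fst m + snd m) (Z.max (fst n + snd n)
      (Z.max (A - fst l) (Z.max (A - fst m) (Z.max (A - snd n)
      (Z.max (B - snd l) (Z.max (B - snd m) (B - fst n)))))))) in
    if (kmin <=? kmax) && (kmin <=? k) then Z.min kmax k - kmin + 1 else 0
  else 0.

Definition in_R (k : Z) (l m n : Z * Z) : Prop :=
  in_Pplus k n /\ fusion_mult k l m n <> 0.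

Definition in_Q3bar (k a b : Z) (ij : Z * Z) : Prop :=
  exists p : Z, 2 * k - 2 * a - 2 * b <= p /\ p <= k - a - 1 /\
    ij = (p + k - a - b, p - 2 * k + 2 * a + 2 * b).

Definition w1 (a b : Z) : Z * Z := (a - 1, b + 2).
Definition w4 (a b : Z) : Z * Z := (a - 2, b + 1).
Definition w6 (a b : Z) : Z * Z := (a - 1, b - 1).

(* Main.v *)
Require Import Defs.
From Stdlib Require Import ZArith Lia Bool.
Open Scope Z_scope.

Lemma fm_pos k l m n A B : A3 l m n = 3*A -> B3 l m n = 3*B -> 0<=A -> 0<=B ->
  Z.max (fst l + snd l) (Z.max (fst m + snd m) (Z.max (fst n + snd n)
      (Z.max (A - fst l) (Z.max (A - fst m) (Z.max (A - snd n)
      (Z.max (B - snd l) (Z.max (B - snd m) (B - fst n)))))))) <= Z.min (Z.min A B) k ->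
  fusion_mult k l m n <> 0.
Proof.
  intros HA HB hA hB Hk. unfold fusion_mult. rewrite HA, HB.
  rewrite !(Z.mul_comm 3), !Z_mod_mult, !Z_div_mult by lia.
  assert (H1: (0 <=? A*3) = true) by (apply Z.leb_le; lia).
  assert (H2: (0 <=? B*3) = true) by (apply Z.leb_le; lia).
  rewrite H1, H2. simpl.
  set (km := Z.max _ _) in *.
  assert (H3: (km <=? Z.min A B) = true) by (apply Z.leb_le; lia).
  assert (H4: (km <=? k) = true) by (apply Z.leb_le; lia).
  rewrite H3, H4. simpl. lia.
Qed.

Theorem mainTheorem12 (a b k : Z) :
  b <= a -> 2 <= b -> a + b + 1 <= k -> k <= a + 2 * b - 1 ->
  forall i j : Z, in_Q3bar k a b (i, j) ->
    in_R k (a, b) (i, j) (w1 a b) /\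
    in_R k (a, b) (i, j) (w4 a b) /\
    in_R k (a, b) (i, j) (w6 a b).
Proof.
  intros h1 h2 h3 h4 i j [p [hp1 [hp2 E]]]. apply pair_equal_spec in E as [-> ->].
  unfold in_R, in_Pplus, w1, w4, w6; cbv beta iota delta [fst snd].
  split; [|split]; (split; [lia|]).
  - apply (fm_pos _ _ _ _ (a+b+1+p) (2*a+2*b+p-k)); unfold A3, B3; cbv beta iota delta [fst snd]; lia.
  - apply (fm_pos _ _ _ _ (a+b+p) (2*a+2*b+p-k-1)); unfold A3, B3; cbv beta iota delta [fst snd]; lia.
  - apply (fm_pos _ _ _ _ (a+b+p-1) (2*a+2*b+p-k-1)); unfold A3, B3; cbv beta iota delta [fst snd]; lia.
Qed.
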